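(* For all integers $1\le k<N$, $$\alpha\bigl(P^{\mathsf{cc}}_{k,N}\bigr)\;\ge\;\frac{1}{19}\,\alpha\bigl(P^{\mathsf{ucc}}_{k,N}\bigr).$$
   Context: $\Theta_{k,N}$ denotes the set of $k$-tuples $(x_1,\dots,x_k)\in[N]^k$ with pairwise distinct entries. Standard $k$-clique $N$-coloring chain $P^{\mathsf{cc}}_{k,N}$: the Markov chain on $\Theta_{k,N}$ which from state $x=(x_1,\dots,x_k)$ samples $\boldsymbol i\in[k]$ uniformly and then $\boldsymbol\ell$ uniformly from $\{\ell\in[N]:\ell\notin\{x_1,\dots,x_k\}\}\cup\{x_{\boldsymbol i}\}$ (a set of size $N-k+1$), and moves to $x$ with its $\boldsymbol i$-th entry replaced by $\boldsymbol\ell$. Uniform $k$-clique $N$-coloring chain $P^{\mathsf{ucc}}_{k,N}$: for $x\in\Theta_{k,N}$, $i\in[k]$, $\ell\in[N]$, let $x^{i,\ell}$ be $x$ with the $i$-th entry replaced by $\ell$ if $\ell\notin\{x_1,\dots,x_k\}$, and $x$ with the entries in positions $i$ and $j$ swapped if $\ell=x_j$. The chain moves from $x$ to $x^{\boldsymbol i,\boldsymbol\ell}$ with $\boldsymbol i\in[k]$, $\boldsymbol\ell\in[N]$ uniform and independent. Both chains have the uniform stationary distribution on $\Theta_{k,N}$. Log-Sobolev constant: for an ergodic Markov chain with transition matrix $P$ on finite state space $V$ with stationary distribution $\pi$, $\mathcal E_P(g,g)=\frac12\sum_{x,y\in V}(g(x)-g(y))^2\pi(x)P(x,y)$; for $f:V\to\mathbb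 R_{\ge 0}$, $\mathrm{Ent}_\pi[f]=\sum_{x}\pi(x)f(x)\log\frac{f(x)}{\mathbb E_\pi[f]}$ (natural log); and $\alpha(P)=\inf\{\mathcal E_P(\sqrt f,\sqrt f)/\mathrm{Ent}_\pi[f] : f\ge 0,\ f \text{ non-constant}\}$. *)

(* Defs.v *)
From HB Require Import structures.
From mathcomp Require Import all_boot all_order all_algebra.
From mathcomp Require Import classical_sets boolp reals exp.
Set Implicit Arguments. Unset Strict Implicit. Unset Printing Implicit Defensive.
Import Order.TTheory GRing.Theory Num.Theory.
Local Open Scope ring_scope.
Local Open Scope classical_set_scope.

Section Functionals.
Variables (R : realType) (V : finType).

Definition dirichlet (P : V -> V -> R) (pi : V -> R) (g : V -> R) : R :=
  2^-1 * \sum_(x : V) \sum_(y : V) (g x - g y) ^+ 2 * pi x * P x y.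

Definition expect (pi : V -> R) (f : V -> R) : R := \sum_(x : V) pi x * f x.

Definition entropy (pi : V -> R) (f : V -> R) : R :=
  \sum_(x : V) pi x * (if f x == 0 then 0 else f x * ln (f x / expect pi f)).

Definition logSobolev (P : V -> V -> R) (pi : V -> R) : R :=
  inf [set r : R | exists f : V -> R,
         [/\ forall x, 0 <= f x, exists x y, f x != f y &
             r = dirichlet P pi (fun x => Num.sqrt (f x)) / entropy pi f]].

Definition uniform_dist : V -> R := fun _ => (#|V|%:R)^-1.
End Functionals.

(* k-tuples (x_1,...,x_k) in [N]^k with pairwise distinct entries,
   encoded as injective finite functions 'I_k -> 'I_N ([N] = {0,...,N-1}). *)
Definition Theta (k N : nat) := {x : {ffun 'I_k -> 'I_N} | injectiveb x}.

Section Chains.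
Variables (R : realType) (k N : nat).

(* x with its i-th entry replaced by l; if l = x_j then entries i,j swapped
   (this is exactly x^{i,l} of the uniform chain; when l is not an entry
   of x, or l = x_i, it is plain replacement). *)
Definition upd_ffun (x : Theta k N) (i : 'I_k) (l : 'I_N) : {ffun 'I_k -> 'I_N} :=
  [ffun m => if m == i then l else if val x m == l then val x i else val x m].

Definition upd (x : Theta k N) (i : 'I_k) (l : 'I_N) : Theta k N :=
  insubd x (upd_ffun x i l).

Definition allowed (x : Theta k N) (i : 'I_k) (l : 'I_N) : bool :=
  (l \notin codom (val x)) || (l == val x i).

Definition P_cc (x y : Theta k N) : R :=
  \sum_(i : 'I_k) \sum_(l : 'I_N | allowed x i l)
     (if upd x i l == y then (k%:R * (N - k + 1)%N%:R)^-1 else 0).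

Definition P_ucc (x y : Theta k N) : R :=
  \sum_(i : 'I_k) \sum_(l : 'I_N)
     (if upd x i l == y then (k%:R * N%:R)^-1 else 0).
End Chains.

(* Main.v *)
Require Import Defs.
From mathcomp Require Import all_boot all_order all_algebra.
From mathcomp Require Import classical_sets boolp reals exp.
From mathcomp Require Import ring lra.
Import Order.TTheory GRing.Theory Num.Theory.
Local Open Scope ring_scope.
Section S.
Variables (R : realType) (k N : nat).
Notation T := (Theta k N).

Lemma valx_inj (x : T) : injective (val x).
Proof. exact/injectiveP/(valP x). Qed.

Ltac fix_inj Hx := repeat match goal with
 | H : ?a = ?a |- _ => clear H
 | Hc : forall m, ?f m <> ?f ?a |- _ => exfalso; exact (Hc a erefl)
 | H : _ = _ |- _ => apply Hx in H; first [subst | idtac]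
 end.

Lemma upd_ffun_inj (x : T) i l : injectiveb (upd_ffun x i l).
Proof.
apply/injectiveP => m1 m2; rewrite !ffunE.
have Hx := valx_inj x.
case: (m1 =P i) => h1; case: (m2 =P i) => h2;
case: (val x m1 =P l) => e1; case: (val x m2 =P l) => e2; move=> E;
subst; fix_inj Hx; congruence.
Qed.

Lemma updE (x : T) i l : val (upd x i l) = upd_ffun x i l.
Proof. by rewrite /upd insubdK //; apply: upd_ffun_inj. Qed.

Definition freec (x : T) (l : 'I_N) := l \notin codom (val x).

Lemma freeP (x : T) l : reflect (forall m, val x m <> l) (freec x l).
Proof.
apply: (iffP idP) => [/codomP H m E|H]; first by apply: H; exists m.
by apply/codomP => -[m E]; apply: (H m); rewrite E.
Qed.

Ltac crush Hx := repeat match goal with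
 | H : ?a = ?a |- _ => clear H
 | H : ?f ?a = ?c, Hc : forall m, ?f m <> ?c |- _ => exfalso; exact (Hc a H)
 | H : ?c = ?f ?a, Hc : forall m, ?f m <> ?c |- _ => exfalso; exact (Hc a (esym H))
 | H : _ = _ |- _ => apply Hx in H; first [subst | idtac]
 end.

Ltac expand := apply: val_inj; apply/ffunP => m; repeat rewrite ?updE ?ffunE.

Ltac split_if := match goal with
 | H : context [if ?b then _ else _] |- _ => let E := fresh "E" in
     case E: b in H |- *; [move/eqP: E => E | move/negbT/eqP: E => E]
 | |- context [if ?b then _ else _] => let E := fresh "E" in
     case E: b; [move/eqP: E => E | move/negbT/eqP: E => E]
end.

Ltac fin := match goal with
 | H : ?a <> ?a |- _ => exfalso; exact (H erefl)
 | |- ?a = ?a => reflexivity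
 | Hc : forall m, _ <> _ |- _ => exfalso; eapply Hc; first [reflexivity | eassumption | (symmetry; eassumption)]
 | H : ?a <> ?b, H' : ?a = ?b |- _ => exfalso; exact (H H')
 | H : ?a <> ?b, H' : ?b = ?a |- _ => exfalso; exact (H (esym H'))
 | |- _ => reflexivity
 end.

Ltac solve_upd Hx := repeat (split_if; try subst); crush Hx; fin.

Lemma upd_self (x : T) i : upd x i (val x i) = x.
Proof. have Hx := valx_inj x. expand. solve_upd Hx. Qed.

Lemma upd_back (x : T) i c : freec x c -> upd (upd x i c) i (val x i) = x.
Proof. move=> /freeP Hc; have Hx := valx_inj x. expand. solve_upd Hx. Qed.


Ltac rw := repeat rewrite ?updE ?ffunE.

Lemma upd_at (x : T) i l : val (upd x i l) i = l.
Proof. by rw; rewrite eqxx. Qed.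



Lemma free2 (x : T) i c : freec x c -> freec (upd x i c) (val x i).
Proof. move=> /freeP Hc; have Hx := valx_inj x. apply/freeP => m; rw; move=> Ee. solve_upd Hx. Qed.

Lemma free3 (x : T) i j c : i != j -> freec x c ->
  freec (upd (upd x i c) j (val x i)) (val x j).
Proof. move=> /eqP ij /freeP Hc; have Hx := valx_inj x. apply/freeP => m; rw; move=> Ee. solve_upd Hx. Qed.

Lemma free3' (y : T) i j l : i != j -> freec y l ->
  freec (upd (upd y j l) i (val y j)) (val y i).
Proof. move=> /eqP ij /freeP Hc; have Hx := valx_inj y. apply/freeP => m; rw; move=> Ee. solve_upd Hx. Qed.

Lemma updF (x : T) c (Hc : freec x c) i m : val (upd x i c) m = if m == i then c else val x m.
Proof. move/freeP: Hc => Hc; have Hx := valx_inj x. rw. solve_upd Hx. Qed.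

Lemma bij3a (x : T) i j c : i != j -> freec x c ->
  upd (upd (upd (upd x i c) j (val x i)) j (val x j)) i (val (upd (upd x i c) j (val x i)) j) = x.
Proof.
move=> ij Hc. have F1 := free2 _ i _ Hc. have F2 := free3 _ _ _ _ ij Hc.
rewrite upd_at.
have F3 : freec (upd (upd (upd x i c) j (val x i)) j (val x j)) (val x i).
  move/eqP: ij => ij; move/freeP: (Hc) => Hc'; have Hx := valx_inj x.
  apply/freeP => m; rewrite (updF _ _ F2) (updF _ _ F1) (updF _ _ Hc) => E. solve_upd Hx.
move/eqP: ij => ij; move/freeP: (Hc) => Hc'; have Hx := valx_inj x.
apply: val_inj; apply/ffunP => m.
rewrite (updF _ _ F3) (updF _ _ F2) (updF _ _ F1) (updF _ _ Hc). solve_upd Hx.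
Qed.

Lemma bij3b (y : T) i j l : i != j -> freec y l ->
  upd (upd (upd (upd y j l) i (val y j)) i (val y i)) j (val (upd (upd y j l) i (val y j)) i) = y.
Proof.
move=> ij Hc. have F1 := free2 _ j _ Hc. rewrite eq_sym in ij. have F2 := free3 _ _ _ _ ij Hc.
rewrite upd_at.
have F3 : freec (upd (upd (upd y j l) i (val y j)) i (val y i)) (val y j).
  move/eqP: ij => ij; move/freeP: (Hc) => Hc'; have Hx := valx_inj y.
  apply/freeP => m; rewrite (updF _ _ F2) (updF _ _ F1) (updF _ _ Hc) => E. solve_upd Hx.
move/eqP: ij => ij; move/freeP: (Hc) => Hc'; have Hx := valx_inj y.
apply: val_inj; apply/ffunP => m.
rewrite (updF _ _ F3) (updF _ _ F2) (updF _ _ F1) (updF _ _ Hc). solve_upd Hx.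
Qed.

Lemma bij3c (x : T) i j c : i != j -> freec x c ->
  val (upd (upd x i c) j (val x i)) i = c.
Proof. move=> /eqP ij /freeP Hc; have Hx := valx_inj x. rw. solve_upd Hx. Qed.

Lemma bij3d (y : T) i j l : i != j -> freec y l ->
  val (upd (upd y j l) i (val y j)) j = l.
Proof. move=> /eqP ij /freeP Hc; have Hx := valx_inj y. rw. solve_upd Hx. Qed.

Lemma swap3 (x : T) i j c : i != j -> freec x c ->
  upd (upd (upd x i c) j (val x i)) i (val x j) = upd x i (val x j).
Proof.
move=> ij Hc. have F1 := free2 _ i _ Hc. have F2 := free3 _ _ _ _ ij Hc.
move/eqP: ij => ij; move/freeP: (Hc) => Hc'; have Hx := valx_inj x.
apply: val_inj; apply/ffunP => m.
rewrite (updF _ _ F2) (updF _ _ F1) (updF _ _ Hc) updE ffunE. solve_upd Hx.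
Qed.

End S.

Arguments updE {k N}. Arguments freec {k N}.
Arguments upd_self {k N}. Arguments upd_back {k N}. Arguments upd_at {k N}.
Arguments free2 {k N}. Arguments free3 {k N}. Arguments free3' {k N}.
Arguments bij3a {k N}. Arguments bij3b {k N}. Arguments bij3c {k N}. Arguments bij3d {k N}.
Arguments swap3 {k N}. Arguments valx_inj {k N}.

Section C.
Variables (R : realType) (k N : nat).
Notation T := (Theta k N).

Definition e (g : T -> R) x i l : R := (g x - g (upd x i l))^+2.

Lemma dir_form (A : T -> 'I_k -> 'I_N -> bool) (c : R) (pi : T -> R) g :
 dirichlet (fun x y => \sum_(i : 'I_k) \sum_(l : 'I_N | A x i l) (if upd x i l == y then c else 0)) pi g
 = 2^-1 * \sum_x \sum_i \sum_(l | A x i l) (e g x i l * pi x * c).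
Proof.
rewrite /dirichlet; congr (_ * _); apply: eq_bigr => x _.
under eq_bigr => y _ do rewrite mulr_sumr.
rewrite exchange_big; apply: eq_bigr => i _.
under eq_bigr => y _ do rewrite mulr_sumr.
rewrite exchange_big; apply: eq_bigr => l _.
rewrite (bigD1 (upd x i l)) //= eqxx big1 ?addr0 // => y /negbTE ne.
by rewrite eq_sym ne mulr0.
Qed.

Definition L0 g := \sum_x \sum_i \sum_l e g x i l.
Definition R0 g := \sum_x \sum_i \sum_(l | allowed x i l) e g x i l.

Lemma dir_ucc g : dirichlet (@P_ucc R k N) (@uniform_dist R T) g =
  2^-1 * ((#|{: T}|%:R)^-1 * (k%:R * N%:R)^-1) * L0 g.
Proof.
rewrite /P_ucc (dir_form (fun _ _ _ => true)) -mulrA; congr (_ * _).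
rewrite /L0 mulr_sumr; apply: eq_bigr => x _; rewrite mulr_sumr; apply: eq_bigr => i _.
rewrite mulr_sumr; apply: eq_bigr => l _; rewrite /uniform_dist; ring.
Qed.

Lemma dir_cc g : dirichlet (@P_cc R k N) (@uniform_dist R T) g =
  2^-1 * ((#|{: T}|%:R)^-1 * (k%:R * (N - k + 1)%N%:R)^-1) * R0 g.
Proof.
rewrite /P_cc dir_form -mulrA; congr (_ * _).
rewrite /R0 mulr_sumr; apply: eq_bigr => x _; rewrite mulr_sumr; apply: eq_bigr => i _.
rewrite mulr_sumr; apply: eq_bigr => l _; rewrite /uniform_dist; ring.
Qed.

Definition D g := \sum_x \sum_i \sum_(l | freec x l) e g x i l.
Definition Ssum g := \sum_x \sum_i \sum_(j | j != i) e g x i (val x j).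

Lemma sum_codom (x : T) (F : 'I_N -> R) : \sum_(l | ~~ freec x l) F l = \sum_j F (val x j).
Proof.
rewrite (eq_bigl (fun l => l \in codom (val x))); last by move=> l; rewrite /freec negbK.
rewrite -big_uniq; last by rewrite codomE; exact: (valP x).
by rewrite codomE big_map big_enum.
Qed.

Lemma e_ge0 g x i l : 0 <= e g x i l.
Proof. exact: sqr_ge0. Qed.

Lemma L0_split g : L0 g = D g + Ssum g.
Proof.
rewrite /L0 /D /Ssum -big_split; apply: eq_bigr => x _; rewrite -big_split; apply: eq_bigr => i _ /=.
rewrite (bigID (freec x)) /=; congr (_ + _).
rewrite sum_codom (bigD1 i) //= {1}/e upd_self subrr expr2 mul0r add0r.
by [].
Qed.

Lemma D_le_R0 g : D g <= R0 g.
Proof.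
rewrite /D /R0; apply: ler_sum => x _; apply: ler_sum => i _.
rewrite [X in _ <= X](bigID (freec x)) /=.
have -> : \sum_(l | allowed x i l && freec x l) e g x i l = \sum_(l | freec x l) e g x i l.
  apply: eq_bigl => l; rewrite /allowed /freec; apply/idP/idP => [/andP[]//|H]; by rewrite H.
by rewrite lerDl sumr_ge0 // => l _; exact: e_ge0.
Qed.

Lemma path_bound g x i j c : i != j -> freec x c ->
 e g x i (val x j) <= 3%:R * (e g x i c + e g (upd x i c) j (val x i)
    + e g (upd (upd x i c) j (val x i)) i (val x j)).
Proof.
move=> ij Hc; rewrite /e swap3 //.
set a := g x; set b := g (upd x i c); set d := g (upd x i (val x j)).
set c' := g _.
have h1 := sqr_ge0 (a - b - (b - c')). have h2 := sqr_ge0 (b - c' - (c' - d)).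
have h3 := sqr_ge0 (a - b - (c' - d)).
nra.
Qed.

Lemma card_free (x : T) : #|[pred c | freec x c]| = (N - k)%N.
Proof.
have H := cardC (mem (codom (val x))).
rewrite card_codom ?card_ord in H; last exact: valx_inj.
move/(congr1 (subn^~ k)): H; rewrite addKn => <-.
apply: eq_card => c; by rewrite !inE.
Qed.

Lemma sum_free_const (x : T) (K : R) : \sum_(c | freec x c) K = (N - k)%:R * K.
Proof.
rewrite (eq_bigl (mem [pred c | freec x c])) // sumr_const card_free.
by rewrite mulr_natl.
Qed.

Lemma sum_neq_const (i : 'I_k) (K : R) : \sum_(j | j != i) K = (k - 1)%:R * K.
Proof.
rewrite (eq_bigl (mem (predC1 i))) // sumr_const cardC1 card_ord subn1.
by rewrite mulr_natl.
Qed.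

Lemma swap_neq (F : 'I_k -> 'I_k -> R) :
  \sum_i \sum_(j | j != i) F i j = \sum_j \sum_(i | i != j) F i j.
Proof.
rewrite (exchange_big_dep predT) //=; apply: eq_bigr => j _.
by apply: eq_bigl => i; rewrite eq_sym.
Qed.

Lemma sum_bij (P : pred (T * 'I_N)) (h h' : T * 'I_N -> T * 'I_N) (F : T * 'I_N -> R) :
 (forall p, P p -> P (h p)) -> (forall p, P p -> P (h' p)) ->
 (forall p, P p -> h' (h p) = p) -> (forall p, P p -> h (h' p) = p) ->
 \sum_(p | P p) F (h p) = \sum_(p | P p) F p.
Proof.
move=> Ph Ph' hK h'K. rewrite [RHS](reindex_onto h h' h'K).
apply: eq_bigl => p; apply/idP/andP => [Pp|[Php /eqP E]].
  by split; [apply: Ph | apply/eqP; apply: hK].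
by rewrite -E; apply: Ph'.
Qed.

Lemma bij2_sum (i : 'I_k) (F : T -> 'I_N -> R) :
  \sum_x \sum_(c | freec x c) F (upd x i c) (val x i) = \sum_y \sum_(l | freec y l) F y l.
Proof.
rewrite !pair_big_dep /=.
pose h := fun p : T * 'I_N => (upd p.1 i p.2, val p.1 i).
have := @sum_bij (fun p => freec p.1 p.2) h h (fun p => F p.1 p.2).
apply.
- by move=> [x c] /= Hc; apply: free2.
- by move=> [x c] /= Hc; apply: free2.
- by move=> [x c] /= Hc; rewrite /h /= upd_back // upd_at.
- by move=> [x c] /= Hc; rewrite /h /= upd_back // upd_at.
Qed.

Lemma bij3_sum (i j : 'I_k) (ij : i != j) (F : T -> 'I_N -> R) :
  \sum_x \sum_(c | freec x c) F (upd (upd x i c) j (val x i)) (val x j)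
  = \sum_y \sum_(l | freec y l) F y l.
Proof.
rewrite !pair_big_dep /=.
pose h := fun p : T * 'I_N => (upd (upd p.1 i p.2) j (val p.1 i), val p.1 j).
pose h' := fun p : T * 'I_N => (upd (upd p.1 j p.2) i (val p.1 j), val p.1 i).
have := @sum_bij (fun p => freec p.1 p.2) h h' (fun p => F p.1 p.2).
apply.
- by move=> [x c] /= Hc; apply: free3.
- by move=> [x c] /= Hc; apply: free3'.
- by move=> [x c] /= Hc; rewrite /h /h' /= bij3a // bij3c.
- by move=> [x c] /= Hc; rewrite /h /h' /= bij3b // bij3d.
Qed.

Lemma D_exch g : D g = \sum_i \sum_y \sum_(l | freec y l) e g y i l.
Proof. by rewrite /D exchange_big. Qed.

Lemma T1E g : \sum_x \sum_i \sum_(j | j != i) \sum_(c | freec x c) e g x i c = (k - 1)%:R * D g.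
Proof.
rewrite /D mulr_sumr; apply: eq_bigr => x _; rewrite mulr_sumr; apply: eq_bigr => i _.
exact: sum_neq_const.
Qed.

Lemma T2E g : \sum_x \sum_i \sum_(j | j != i) \sum_(c | freec x c) e g (upd x i c) j (val x i)
  = (k - 1)%:R * D g.
Proof.
rewrite exchange_big.
transitivity (\sum_i \sum_(j | j != i) \sum_y \sum_(l | freec y l) e g y j l).
  apply: eq_bigr => i _; rewrite exchange_big; apply: eq_bigr => j _.
  exact: (bij2_sum i (fun y l => e g y j l)).
rewrite (swap_neq (fun i j => \sum_y \sum_(l | freec y l) e g y j l)).
rewrite D_exch mulr_sumr; apply: eq_bigr => j _; exact: sum_neq_const.
Qed.

Lemma T3E g : \sum_x \sum_i \sum_(j | j != i) \sum_(c | freec x c)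
    e g (upd (upd x i c) j (val x i)) i (val x j) = (k - 1)%:R * D g.
Proof.
rewrite exchange_big.
transitivity (\sum_i \sum_(j | j != i) \sum_y \sum_(l | freec y l) e g y i l).
  apply: eq_bigr => i _; rewrite exchange_big; apply: eq_bigr => j Hj.
  have ij : i != j by rewrite eq_sym.
  exact: (bij3_sum i j ij (fun y l => e g y i l)).
rewrite D_exch mulr_sumr; apply: eq_bigr => i _; exact: sum_neq_const.
Qed.

Lemma sum4_split (F1 F2 F3 : T -> 'I_k -> 'I_k -> 'I_N -> R) :
 \sum_x \sum_i \sum_(j | j != i) \sum_(c | freec x c) (3%:R * (F1 x i j c + F2 x i j c + F3 x i j c))
 = 3%:R * (\sum_x \sum_i \sum_(j | j != i) \sum_(c | freec x c) F1 x i j c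
        + \sum_x \sum_i \sum_(j | j != i) \sum_(c | freec x c) F2 x i j c
        + \sum_x \sum_i \sum_(j | j != i) \sum_(c | freec x c) F3 x i j c).
Proof.
rewrite -!big_split mulr_sumr; apply: eq_bigr => x _.
rewrite -!big_split mulr_sumr; apply: eq_bigr => i _.
rewrite -!big_split mulr_sumr; apply: eq_bigr => j _.
rewrite -!big_split mulr_sumr; apply: eq_bigr => c _.
by [].
Qed.

Lemma S_bound g : (N - k)%:R * Ssum g <= 9%:R * ((k - 1)%:R * D g).
Proof.
have -> : (N - k)%:R * Ssum g = \sum_x \sum_i \sum_(j | j != i) \sum_(c | freec x c) e g x i (val x j).
  rewrite /Ssum mulr_sumr; apply: eq_bigr => x _; rewrite mulr_sumr; apply: eq_bigr => i _.
  rewrite mulr_sumr; apply: eq_bigr => j _; by rewrite sum_free_const.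
apply: le_trans.
  apply: ler_sum => x _; apply: ler_sum => i _; apply: ler_sum => j Hj; apply: ler_sum => c Hc.
  apply: (path_bound g x i j c) => //; by rewrite eq_sym.
rewrite (sum4_split (fun x i j c => e g x i c) (fun x i j c => e g (upd x i c) j (val x i))
   (fun x i j c => e g (upd (upd x i c) j (val x i)) i (val x j))).
rewrite T1E T2E T3E.
set u := (k - 1)%:R * D g; lra.
Qed.

Lemma Ssum_ge0 g : 0 <= Ssum g.
Proof. by apply: sumr_ge0 => x _; apply: sumr_ge0 => i _; apply: sumr_ge0 => j _; exact: e_ge0. Qed.
Lemma D_ge0 g : 0 <= D g.
Proof. by apply: sumr_ge0 => x _; apply: sumr_ge0 => i _; apply: sumr_ge0 => j _; exact: e_ge0. Qed.

Lemma dir_compare g : (1 <= k)%N -> (k < N)%N ->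
  dirichlet (@P_ucc R k N) (@uniform_dist R T) g <= 19%:R * dirichlet (@P_cc R k N) (@uniform_dist R T) g.
Proof.
move=> k1 kN.
rewrite dir_ucc dir_cc L0_split.
have hn : N%:R = (N - k)%:R + k%:R :> R by rewrite -natrD subnK // ltnW.
have hN1 : (N - k + 1)%N%:R = (N - k)%:R + 1 :> R by rewrite natrD.
have hk1 : (k - 1)%:R = k%:R - 1 :> R by rewrite natrB.
have ha : 1 <= (N - k)%:R :> R by rewrite ler1n subn_gt0.
have hk : 1 <= k%:R :> R by rewrite ler1n.
have hS := S_bound g. rewrite hk1 in hS.
have hD := D_le_R0 g. have S0 := Ssum_ge0 g. have D0 := D_ge0 g.
rewrite hN1 hn.
set a := (N - k)%:R in ha hS hn hN1 *. set kk := k%:R in hk hS hn *.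
set p := (#|{: T}|%:R)^-1.
have p0 : 0 <= p by rewrite invr_ge0.
set Dv := D g in hS hD D0 *. set Sv := Ssum g in hS S0 *. set Rv := R0 g in hD *.
have key : (a + 1) * (Dv + Sv) <= 19%:R * (a + kk) * Rv.
  have h1 : (a + 1) * (a * Sv) <= (a + 1) * (9%:R * ((kk - 1) * Dv)).
    by apply: ler_wpM2l => //; lra.
  have h2 : a * ((a + 1) * (Dv + Sv)) <= a * (19%:R * (a + kk) * Rv).
    have h3 : (a + 1) * (a + 9%:R * (kk - 1)) <= 19%:R * a * (a + kk) by nra.
    have h4 : 0 <= 19%:R * a * (a + kk) * (Rv - Dv) by apply: mulr_ge0; [nra | lra].
    nra.
  by rewrite ler_pM2l in h2 => //; lra.
have nz1 : kk != 0 by apply/eqP; lra.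
have nz2 : a + kk != 0 by apply/eqP; lra.
have nz3 : a + 1 != 0 by apply/eqP; lra.
have E1 : 2^-1 * (p * (kk * (a + kk))^-1) * (Dv + Sv)
   = (2^-1 * p * (kk * (a + kk) * (a + 1))^-1) * ((a + 1) * (Dv + Sv)).
  clearbody p a kk Dv Sv Rv. by field; rewrite nz1 nz2 nz3.
rewrite E1.
have -> : 19%:R * (2^-1 * (p * (kk * (a + 1))^-1) * Rv)
   = (2^-1 * p * (kk * (a + kk) * (a + 1))^-1) * (19%:R * (a + kk) * Rv).
  clearbody p a kk Dv Sv Rv. by field; rewrite nz1 nz2 nz3.
apply: ler_wpM2l => //.
apply: mulr_ge0; first by apply: mulr_ge0 => //; lra.
rewrite invr_ge0; apply: mulr_ge0; [apply: mulr_ge0|]; lra.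
Qed.

Lemma xlog_bound (y m : R) : 0 < y -> 0 < m -> y - m <= y * ln (y / m).
Proof.
move=> y0 m0.
have q0 : 0 < m / y by rewrite divr_gt0.
have h := @le_ln1Dx R (m / y - 1) ltac:(lra).
rewrite (_ : 1 + (m / y - 1) = m / y) in h; last by ring.
have E : ln (y / m) = - ln (m / y).
  by rewrite -lnV ?invf_div // posrE.
rewrite E.
have -> : y - m = y * (1 - m / y) by field; apply/eqP; lra.
rewrite ler_pM2l //; lra.
Qed.

Lemma ent_ge0 (V : finType) (f : V -> R) : (forall x, 0 <= f x) ->
  0 <= entropy (@uniform_dist R V) f.
Proof.
move=> f0.
case: (pickP (fun _ : V => true)) => [x0 _ | V0]; last first.
  by rewrite /entropy big_pred0.
have cV : (0 < #|{: V}|)%N by apply/card_gt0P; exists x0.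
have pi0 : 0 < (#|{: V}|%:R : R)^-1 by rewrite invr_gt0 ltr0n.
set m := expect (@uniform_dist R V) f.
have m0 : 0 <= m by apply: sumr_ge0 => x _; apply: mulr_ge0 => //; exact: ltW.
case: (eqVneq m 0) => [mz|mnz].
  have fz : forall x, f x = 0.
    have nn : forall i, predT i -> 0 <= @uniform_dist R V i * f i.
      by move=> y _; apply: mulr_ge0 => //; exact: ltW.
    move=> x; have := @psumr_eq0P _ V predT (fun x => @uniform_dist R V x * f x) nn mz x isT.
    rewrite /uniform_dist.
    move/eqP; rewrite mulf_eq0 => /orP[/eqP|/eqP //]; lra.
  by rewrite /entropy big1 // => x _; rewrite fz eqxx mulr0.
have mp : 0 < m by rewrite lt_neqAle eq_sym mnz m0.
apply: (@le_trans _ _ (\sum_(x : V) @uniform_dist R V x * (f x - m))).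
  under eq_bigr => x _ do rewrite mulrBr.
  rewrite sumrB -/(expect (@uniform_dist R V) f) -/m.
  rewrite -mulr_suml sumr_const /uniform_dist.
  rewrite (_ : #|xpredT| = #|{: V}|); last by apply: eq_card.
  have -> : (#|{: V}|%:R : R)^-1 *+ #|{: V}| = 1.
    by rewrite -(mulr_natl (_^-1)) mulfV // pnatr_eq0 -lt0n.
  by rewrite mul1r subrr.
rewrite /entropy; apply: ler_sum => x _; rewrite ler_pM2l //.
case: (eqVneq (f x) 0) => [->|fnz]; first by lra.
apply: xlog_bound => //; by rewrite lt_neqAle eq_sym fnz f0.
Qed.

End C.

Theorem mainTheorem7 (R : realType) (k N : nat) :
  (1 <= k)%N -> (k < N)%N ->
  (19%:R)^-1 * logSobolev (@P_ucc R k N) (@uniform_dist R (Theta k N))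
    <= logSobolev (@P_cc R k N) (@uniform_dist R (Theta k N)).
Proof.
Local Open Scope classical_set_scope.
move=> k1 kN; rewrite /logSobolev.
set A := (X in _ * inf X <= _). set B := (X in _ <= inf X).
have dge0 : forall g, 0 <= dirichlet (@P_ucc R k N) (@uniform_dist R (Theta k N)) g.
  move=> g; rewrite dir_ucc L0_split; apply: mulr_ge0; last first.
    by apply: addr_ge0; [apply: D_ge0|apply: Ssum_ge0].
  apply: mulr_ge0; [by rewrite invr_ge0 | apply: mulr_ge0; by rewrite invr_ge0 ?mulr_ge0].
have Alb : lbound A 0.
  move=> r [f [f0 _ ->]]; apply: divr_ge0; [exact: dge0 | exact: ent_ge0].
case: (pselect (B !=set0)) => [Bn0|B0].
  apply: lb_le_inf => // r [f [f0 fnc ->]].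
  have Af : A (dirichlet (@P_ucc R k N) (@uniform_dist R (Theta k N)) (fun x => Num.sqrt (f x))
        / entropy (@uniform_dist R (Theta k N)) f) by exists f.
  have h1 := ge_inf (ex_intro _ 0 Alb) Af.
  set Y := (X in _ <= X) in h1.
  set X := (X in _ <= X).
  have h2 : Y <= 19%:R * X.
    rewrite /Y /X mulrA; apply: ler_wpM2r; first by rewrite invr_ge0; exact: ent_ge0.
    exact: dir_compare.
  lra.
have -> : B = set0 by apply/nonemptyPn.
have -> : A = set0.
  apply/nonemptyPn => -[r [f [f0 fnc _]]]; apply: B0.
  by eexists; exists f; split; [exact: f0 | exact: fnc | reflexivity].
by rewrite inf0 mulr0.
Qed.
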